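(* For any $\mathcal{H}, \mathcal{G} \in \mathcal{P}$, the following relationships between the model inclusion order and the twin order exist: (i) if $\mathcal{H} \preceq_{s} \mathcal{G}$ then $\mathcal{H} \preceq_{t} \mathcal{G}$; (ii) if $\mathcal{H} \preceq_{s} \mathcal{G}$ and $\mathcal{H}$ is covered by $\mathcal{G}$ in the twin order (i.e., $\mathcal{H} \prec_{t} \mathcal{G}$ and there is no $\mathcal{F}\in\mathcal{P}$ with $\mathcal{H} \prec_{t} \mathcal{F} \prec_{t} \mathcal{G}$), then $\mathcal{H}$ is covered by $\mathcal{G}$ in the model inclusion order (i.e., $\mathcal{H} \prec_{s} \mathcal{G}$ and there is no $\mathcal{F}\in\mathcal{P}$ with $\mathcal{H} \prec_{s} \mathcal{F} \prec_{s} \mathcal{G}$).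
   Context: Let $V=\{1,\dots,p\}$ and let $\tau$ be a twin-pairing function on $V$, i.e. $\tau(i)\in V$ with $\tau(\tau(i))=i$ and $\tau(i)\neq i$; it is extended to edges by $\tau(i,j)=(\tau(i),\tau(j))$ (endpoints reordered so the smaller comes first) and to sets elementwise. Fix a partition $(L,R)$ of $V$ with $\tau(L)=R$, numbered so that $L=\{1,\dots,q\}$, $R=\{q+1,\dots,p\}$. Let $F_V=\{(i,j): i,j\in V, i<j\}$, $F_L=\{(i,j)\in F_V: i<\tau(j)\}$, $F_R=\{(i,j)\in F_V: i>\tau(j)\}$. A coloured graph $\mathcal G=(\mathcal V,\mathcal E)$ consists of a partition $\mathcal V$ of $V$ into vertex colour classes and a partition $\mathcal E$ of an edge set $E\subseteq F_V$ into edge colour classes. It is a coloured graph for paired data (pdCG) if every colour class is either atomic (a single element) or twin-pairing (of the form $\{i,\tau(i)\}$ or $\{(i,j),\tau(i,j)\}$ with $(i,j)\neq\tau(i,j)$). The associated RCON model for paired data $\mathcal{P}(\mathcal G)$ is the family of Gaussian distributions whose concentration matrix has zero entries for missing edges and equal entries for vertices (diagonal entries) or edges (off-diagonal entries) in the same colour class; $\mathcal{P}$ denotes the family of all pdCGs on $V$ (equivalently, of these models). Every pdCG is equivalently represented by the quadruplet $(V,E,\mathbb L,\mathbb E)$ where $E$ is the union of the edge colour classes, $E_L=E\cap F_L$, $E_R=E\cap F_R$, $\mathbb L=\{i\in L:\{i\}\in\mathcal V\}$ and $\mathbb E=\{(i,j)\in E_L\cap\tau(E_R): \{(i,j)\}\in\mathcal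 E\}$. The model inclusion order is $\mathcal H\preceq_s\mathcal G$ iff $\mathcal P(\mathcal H)\subseteq\mathcal P(\mathcal G)$, which holds iff the edge set of $\mathcal H$ is contained in that of $\mathcal G$, every vertex colour class of $\mathcal H$ is a union of vertex colour classes of $\mathcal G$, and every edge colour class of $\mathcal H$ is a union of edge colour classes of $\mathcal G$. The twin order is $\mathcal H\preceq_t\mathcal G$ iff $E_{\mathcal H}\subseteq E_{\mathcal G}$, $\mathbb L_{\mathcal H}\subseteq\mathbb L_{\mathcal G}$ and $\mathbb E_{\mathcal H}\subseteq\mathbb E_{\mathcal G}$. Strict versions are denoted $\prec_s$, $\prec_t$. *)

(* Defs.v *)
(* Vertices V = {1,...,p} are represented 0-based by 'I_p
   (the shift preserves all order comparisons). *)
From HB Require Import structures.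
From mathcomp Require Import all_boot all_order all_algebra.
From mathcomp Require Import reals.

Set Implicit Arguments.
Unset Strict Implicit.
Unset Printing Implicit Defensive.

Import GRing.Theory Num.Theory.

Definition edge (p : nat) := ('I_p * 'I_p)%type.

Definition FV (p : nat) : {set edge p} := [set e : edge p | (e.1 < e.2)%N].

Definition twin_pairing (p : nat) (tau : 'I_p -> 'I_p) : Prop :=
  (forall i, tau (tau i) = i) /\ (forall i, tau i != i).

Definition Lset (p q : nat) : {set 'I_p} := [set i : 'I_p | (i < q)%N].
Definition Rset (p q : nat) : {set 'I_p} := [set i : 'I_p | (q <= i)%N].

Definition LR_compatible (p q : nat) (tau : 'I_p -> 'I_p) : Prop :=
  tau @: Lset p q = Rset p q.

Definition tau_e (p : nat) (tau : 'I_p -> 'I_p) (e : edge p) : edge p :=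
  if (tau e.1 < tau e.2)%N then (tau e.1, tau e.2) else (tau e.2, tau e.1).

Definition FL (p : nat) (tau : 'I_p -> 'I_p) : {set edge p} :=
  [set e in FV p | (e.1 < tau e.2)%N].
Definition FR (p : nat) (tau : 'I_p -> 'I_p) : {set edge p} :=
  [set e in FV p | (tau e.2 < e.1)%N].

(* A coloured graph: (vertex colour classes, edge colour classes). *)
Definition cgraph (p : nat) := ({set {set 'I_p}} * {set {set edge p}})%type.

Definition Eset (p : nat) (G : cgraph p) : {set edge p} := cover G.2.

Definition is_pdCG (p : nat) (tau : 'I_p -> 'I_p) (G : cgraph p) : Prop :=
  [/\ partition G.1 [set: 'I_p],
      partition G.2 (Eset G),
      Eset G \subset FV p,
      (forall C, C \in G.1 ->
         (exists i, C = [set i]) \/ (exists i, C = [set i; tau i]))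
    & (forall C, C \in G.2 ->
         (exists e, C = [set e]) \/
         (exists e, tau_e tau e != e /\ C = [set e; tau_e tau e]))].

Definition posdef (R : realType) (p : nat) (K : 'M[R]_p) : Prop :=
  forall v : 'rV[R]_p, (v != 0)%R -> (0 < (v *m K *m trmx v) ord0 ord0)%R.

(* K is the concentration matrix of a distribution in the RCON model P(G):
   symmetric positive definite, zero for missing edges, equal entries within
   each vertex (diagonal) and edge (off-diagonal) colour class. *)
Definition in_model (R : realType) (p : nat) (G : cgraph p) (K : 'M[R]_p) : Prop :=
  [/\ trmx K = K,
      posdef K,
      (forall i j : 'I_p, (i < j)%N -> (i, j) \notin Eset G -> K i j = 0%R),
      (forall C, C \in G.1 -> forall i j, i \in C -> j \in C -> K i i = K j j)
    & (forall C, C \in G.2 -> forall e f : edge p, e \in C -> f \in C ->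
         K e.1 e.2 = K f.1 f.2)].

Definition s_le (R : realType) (p : nat) (H G : cgraph p) : Prop :=
  forall K : 'M[R]_p, in_model H K -> in_model G K.
Definition s_lt (R : realType) (p : nat) (H G : cgraph p) : Prop :=
  s_le R H G /\ ~ s_le R G H.

Definition LL (p q : nat) (G : cgraph p) : {set 'I_p} :=
  [set i in Lset p q | [set i] \in G.1].
Definition EE (p : nat) (tau : 'I_p -> 'I_p) (G : cgraph p) : {set edge p} :=
  [set e in (Eset G :&: FL tau) :&: (tau_e tau @: (Eset G :&: FR tau))
     | [set e] \in G.2].

Definition t_le (p q : nat) (tau : 'I_p -> 'I_p) (H G : cgraph p) : Prop :=
  [/\ Eset H \subset Eset G, LL q H \subset LL q G & EE tau H \subset EE tau G].
Definition t_lt (p q : nat) (tau : 'I_p -> 'I_p) (H G : cgraph p) : Prop :=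
  t_le q tau H G /\ ~ t_le q tau G H.

Definition t_covered (p q : nat) (tau : 'I_p -> 'I_p) (H G : cgraph p) : Prop :=
  t_lt q tau H G /\
  ~ (exists F : cgraph p, is_pdCG tau F /\ t_lt q tau H F /\ t_lt q tau F G).
Definition s_covered (R : realType) (p : nat) (tau : 'I_p -> 'I_p) (H G : cgraph p) : Prop :=
  s_lt R H G /\
  ~ (exists F : cgraph p, is_pdCG tau F /\ s_lt R H F /\ s_lt R F G).

(* Main.v *)
Require Import Defs.
From mathcomp Require Import all_boot all_order all_algebra.
From mathcomp Require Import reals.
From mathcomp Require Import ring lra zify.
Set Implicit Arguments. Unset Strict Implicit. Unset Printing Implicit Defensive.

Import Order.TTheory GRing.Theory Num.Theory.
Local Open Scope ring_scope.

Lemma posdef_dd (R : realType) p (K : 'M[R]_p) :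
  (forall i j, i != j -> `|K i j| <= 2) ->
  (forall i, 2 * p%:R + 1 <= K i i) -> posdef K.
Proof.
move=> Hoff Hdiag v v0.
have -> : (v *m K *m v^T) ord0 ord0 = \sum_i \sum_j v ord0 i * K i j * v ord0 j.
  rewrite mxE exchange_big /=; apply: eq_bigr => j _.
  rewrite !mxE big_distrl /=; apply: eq_bigr => i _. by [].
pose x : 'I_p -> R := fun i => v ord0 i.
set s := \sum_i x i ^+ 2.
have T : forall i j, - (x i ^+ 2 + x j ^+ 2) + (i == j)%:R * (2 * p%:R + 3) * x i ^+ 2
   <= v ord0 i * K i j * v ord0 j.
  move=> i j; rewrite -/(x i) -/(x j); case: eqP => [<-|/eqP ne].
    have := Hdiag i; rewrite /= mul1r => h.
    have h2 : 0 <= (K i i - (2 * p%:R + 1)) * x i ^+ 2 by apply: mulr_ge0; [lra | exact: sqr_ge0].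
    nra.
  have := Hoff _ _ ne; rewrite ler_norml => /andP[h1 h2].
  have a1 : 0 <= (2 + K i j) * (x i + x j) ^+ 2 by apply: mulr_ge0; [lra | exact: sqr_ge0].
  have a2 : 0 <= (2 - K i j) * (x i - x j) ^+ 2 by apply: mulr_ge0; [lra | exact: sqr_ge0].
  rewrite mul0r mul0r addr0; nra.
have s0 : 0 < s.
  rewrite lt_def sumr_ge0 ?andbT => [|i _]; last exact: sqr_ge0.
  apply/negP => /eqP/psumr_eq0P => h.
  move/negP: v0; apply; apply/eqP/matrixP => i j.
  rewrite (ord1 i) mxE; have := h (fun k _ => sqr_ge0 _) j isT; rewrite /x => /eqP.
  by rewrite sqrf_eq0 => /eqP.
apply: (lt_le_trans _ (ler_sum _ (fun i _ => ler_sum _ (fun j _ => T i j)))).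
have -> : \sum_i \sum_j (- (x i ^+ 2 + x j ^+ 2) + (i == j)%:R * (2 * p%:R + 3) * x i ^+ 2)
   = \sum_i (- (p%:R * x i ^+ 2 + s) + (2 * p%:R + 3) * x i ^+ 2).
  apply: eq_bigr => i _.
  rewrite big_split /= sumrN big_split /= sumr_const card_ord.
  congr (- _ + _); first by rewrite mulr_natl.
  rewrite (bigD1 i) //= eqxx mul1r big1 ?addr0 // => j /negbTE; rewrite eq_sym => ->.
  by rewrite !mul0r.
rewrite big_split /= sumrN big_split /= sumr_const card_ord -mulr_natl -!mulr_sumr.
rewrite -/s. nra.
Qed.

Section Tau.
Variables (p q : nat) (tau : 'I_p -> 'I_p).
Hypothesis Htw : twin_pairing tau.
Hypothesis HLR : LR_compatible q tau.

Lemma tauK : forall i, tau (tau i) = i. Proof. by case: Htw. Qed.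
Lemma tau_neq : forall i, tau i != i. Proof. by case: Htw. Qed.
Lemma tau_inj : injective tau. Proof. exact: can_inj tauK. Qed.

Lemma tauLR i : (q <= tau i)%N = (i < q)%N.
Proof.
case: (ltnP i q) => h.
  have : tau i \in Rset p q by rewrite -HLR; apply: imset_f; rewrite inE.
  by rewrite inE.
have : i \in Rset p q by rewrite inE.
rewrite -HLR => /imsetP[k]; rewrite inE => hk ->.
by rewrite tauK leqNgt hk.
Qed.

Lemma tauLR' i : ((tau i < q)%N = (q <= i)%N).
Proof. by rewrite ltnNge tauLR -leqNgt. Qed.

Lemma tau_e_FV e : e \in FV p -> tau_e tau e \in FV p.
Proof.
case: e => a b; rewrite /tau_e !inE /= => ab.
case: ifP => //= /negbT; rewrite -leqNgt leq_eqVlt => /orP[/eqP/val_inj h|//].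
by move: ab; rewrite (tau_inj h) ltnn.
Qed.

Lemma tau_eK e : e \in FV p -> tau_e tau (tau_e tau e) = e.
Proof.
case: e => a b; rewrite /tau_e !inE /= => ab.
rewrite /tau_e /=; case: (ltnP (tau a) (tau b)) => h /=; rewrite !tauK ?ab //.
by rewrite ltnNge ltnW.
Qed.

Lemma tau_e_FL e : e \in FL tau -> tau_e tau e \in FR tau.
Proof.
case: e => a b; rewrite /tau_e !inE /= => /andP[ab atb].
have hb := tauLR b; have ha := tauLR a.
have nab : nat_of_ord (tau a) != tau b.
  by apply/eqP => /val_inj /tau_inj h; move: ab; rewrite h ltnn.
case: ifP => /= h; rewrite ?inE /= ?tauK; move: hb ha; case: (ltnP b q); case: (ltnP a q); lia.
Qed.

Lemma tau_e_FR e : e \in FR tau -> tau_e tau e \in FL tau.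
Proof.
case: e => a b; rewrite /tau_e !inE /= => /andP[ab atb].
have hb := tauLR b; have ha := tauLR a.
have nab : nat_of_ord (tau a) != tau b.
  by apply/eqP => /val_inj /tau_inj h; move: ab; rewrite h ltnn.
case: ifP => /= h; rewrite ?inE /= ?tauK; move: hb ha; case: (ltnP b q); case: (ltnP a q); lia.
Qed.

Lemma tau_e_twin e : e \in FV p -> e \notin FL tau -> e \notin FR tau -> tau_e tau e = e.
Proof.
case: e => a b; rewrite /tau_e !inE /= => ab; rewrite ab /= -!leqNgt => h1 h2.
have : nat_of_ord a = tau b by apply/eqP; rewrite eqn_leq h1 h2.
move=> /val_inj E; subst a; rewrite tauK.
have -> : (b < tau b)%N = false by move: ab; move: (tau b) => c; lia.
by [].
Qed.

Lemma same_class (T : finType) (P : {set {set T}}) A B x :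
  trivIset P -> A \in P -> B \in P -> x \in A -> x \in B -> A = B.
Proof. by move=> tP hA hB xA xB; rewrite -(def_pblock tP hA xA) (def_pblock tP hB xB). Qed.

Variable R : realType.

Definition mkK (E : {set edge p}) (d : 'I_p -> R) (w : edge p -> R) : 'M[R]_p :=
  \matrix_(i, j) if (i < j)%N then (if (i, j) \in E then w (i, j) else 0)
                 else if (j < i)%N then (if (j, i) \in E then w (j, i) else 0)
                 else d i.

Lemma mkK_edge E d w e : e \in FV p -> mkK E d w e.1 e.2 = if e \in E then w e else 0.
Proof. by case: e => a b; rewrite inE /= => ab; rewrite mxE ab. Qed.

Lemma mkK_diag E d w i : mkK E d w i i = d i.
Proof. by rewrite mxE ltnn. Qed.

Lemma mkK_model H d w : is_pdCG tau H ->
  (forall C, C \in H.1 -> forall i j, i \in C -> j \in C -> d i = d j) ->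
  (forall C, C \in H.2 -> forall e f, e \in C -> f \in C -> w e = w f) ->
  (forall i, 2 * p%:R + 1 <= d i) -> (forall e, `|w e| <= 2) ->
  in_model H (mkK (Eset H) d w).
Proof.
case=> pH1 pH2 EH _ _ hd hw hdi hwi; split.
- apply/matrixP => i j; rewrite !mxE.
  case: (ltngtP i j) => // /val_inj ->. by [].
- apply: posdef_dd => [i j ij|i]; last by rewrite mkK_diag.
  rewrite mxE; case: (ltngtP i j) => h; first (by case: ifP; rewrite ?normr0).
    by case: ifP; rewrite ?normr0.
  by move: ij; rewrite (val_inj h) eqxx.
- by move=> i j ij nE; rewrite mxE ij (negbTE nE).
- by move=> C hC i j iC jC; rewrite !mkK_diag (hd C hC i j).
- move=> C hC e f eC fC.
  have eE : e \in Eset H by apply/bigcupP; exists C.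
  have fE : f \in Eset H by apply/bigcupP; exists C.
  rewrite !mkK_edge ?eE ?fE ?(subsetP EH) //; exact: hw hC e f eC fC.
Qed.

Lemma part1 H G : is_pdCG tau H -> is_pdCG tau G -> s_le R H G -> t_le q tau H G.
Proof.
move=> hH hG sHG.
have [pH1 pH2 EH sh1H sh2H] := hH.
have [pG1 pG2 EG sh1G sh2G] := hG.
have /and3P[/eqP cH1 tH1 _] := pH1.
have /and3P[/eqP cH2 tH2 _] := pH2.
have /and3P[/eqP cG1 tG1 _] := pG1.
have /and3P[/eqP cG2 tG2 _] := pG2.
pose c : R := 2 * p%:R + 1.
have E_sub : Eset H \subset Eset G.
  apply/subsetP => e eH; apply/negPn/negP => eG.
  have := sHG (mkK (Eset H) (fun=> c) (fun=> 1)).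
  case.
    apply: mkK_model => // e0; rewrite normr1; lra.
  move=> _ _ Z _ _.
  have ev : e \in FV p by apply: (subsetP EH).
  have := Z e.1 e.2; rewrite -surjective_pairing mkK_edge // eH.
  move: ev; rewrite inE => ev /(_ ev eG) /eqP; by rewrite oner_eq0.
split => //.
- apply/subsetP => i; rewrite !inE => /andP[iL iH]; rewrite iL /=.
  have : i \in cover G.1 by rewrite cG1 inE.
  move=> /bigcupP[D DG iD].
  case: (sh1G D DG) => [[m Dm]|[m Dm]].
    by move: iD DG; rewrite Dm => /set1P ->.
  exfalso.
  have := sHG (mkK (Eset H) (fun j => c + (j == i)%:R) (fun=> 1)).
  case.
    apply: mkK_model => //.
    + move=> C hC j k jC kC.
      case iC: (i \in C).
        have CE : C = [set i] by apply: (same_class tH1 hC iH iC); rewrite inE.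
        by move: jC kC; rewrite CE => /set1P -> /set1P ->.
      have -> : (j == i) = false by apply/negP => /eqP E; subst; rewrite jC in iC.
      have -> : (k == i) = false by apply/negP => /eqP E; subst; rewrite kC in iC.
      by [].
    + by move=> j; rewrite /c lerDl ler0n.
    + by move=> e0; rewrite normr1; lra.
  move=> _ _ _ V _.
  have tiD : tau i \in D.
    move: iD; rewrite Dm !inE => /orP[/eqP ->|/eqP ->]; by rewrite ?tauK eqxx ?orbT.
  have := V D DG i (tau i) iD tiD.
  rewrite !mkK_diag eqxx (negbTE (tau_neq _)) /=; lra.
- apply/subsetP => e /setIdP [/setIP [/setIP [eH eFL] eim] eC].
  apply/setIdP; split.
    rewrite !in_setI (subsetP E_sub) //= eFL /=.
    move/imsetP: eim => [h0 /setIP [h0H h0FR] ->]; apply: imset_f.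
    by rewrite in_setI (subsetP E_sub).
  have : e \in cover G.2 by rewrite -/(Eset G) (subsetP E_sub).
  move=> /bigcupP[D DG eD].
  case: (sh2G D DG) => [[m Dm]|[m [nm Dm]]].
    by move: eD DG; rewrite Dm => /set1P ->.
  exfalso.
  have [f fD fe] : exists2 f, f \in D & f != e.
    case: (eqVneq e m) => [Em|ne]; last by exists m; [rewrite Dm !inE eqxx | rewrite eq_sym].
    by exists (tau_e tau m); rewrite ?Dm ?inE ?eqxx ?orbT // Em.
  have := sHG (mkK (Eset H) (fun=> c) (fun x => 1 + (x == e)%:R)).
  case.
    apply: mkK_model => //.
    + move=> C hC x y xC yC.
      case iC: (e \in C).
        have CE : C = [set e] by apply: (same_class tH2 hC eC iC); rewrite inE.
        by move: xC yC; rewrite CE => /set1P -> /set1P ->.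
      have -> : (x == e) = false by apply/negP => /eqP E; subst; rewrite xC in iC.
      have -> : (y == e) = false by apply/negP => /eqP E; subst; rewrite yC in iC.
      by [].
    + move=> x; case: (x == e) => /=; rewrite ?addr0 ?normr1; try lra.
      by rewrite ger0_norm; lra.
  move=> _ _ _ _ Ed.
  have fE : f \in Eset G by apply/bigcupP; exists D.
  have := Ed D DG e f eD fD.
  have fFV : f \in FV p := subsetP EG _ fE.
  have eFV : e \in FV p := subsetP EH _ eH.
  rewrite !mkK_edge // eH eqxx (negbTE fe).
  case: (f \in Eset H) => /=; rewrite ?addr0; lra.
Qed.

Lemma key_vert F H : is_pdCG tau F -> is_pdCG tau H -> LL q F \subset LL q H ->
  forall C k, C \in H.1 -> C = [set k; tau k] -> C \in F.1.
Proof.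
move=> hF hH LFH C k hC Ck.
have [pH1 pH2 EH sh1H sh2H] := hH.
have [pF1 pF2 EF sh1F sh2F] := hF.
have /and3P[_ tH1 _] := pH1.
have /and3P[/eqP cF1 _ _] := pF1.
have vC : forall j0 : 'I_p, (j0 < q)%N -> C = [set j0; tau j0] -> C \in F.1.
  move=> j0 jq CE.
  have : j0 \in cover F.1 by rewrite cF1 inE.
  move=> /bigcupP[D DF jD].
  case: (sh1F D DF) => [[m Dm]|[m Dm]].
    move: jD DF; rewrite Dm => /set1P <- jF.
    have : j0 \in LL q F by rewrite inE inE jq.
    move=> /(subsetP LFH) /setIdP[_ jH].
    have := same_class tH1 jH hC (set11 j0).
    rewrite CE !inE eqxx /= => /(_ isT) E.
    have : tau j0 \in [set j0] by rewrite E !inE eqxx orbT.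
    by move=> /set1P /eqP; rewrite (negbTE (tau_neq _)).
  suff DC : D = C by rewrite -DC.
  move: jD; rewrite Dm CE !inE => /orP[/eqP ->|/eqP ->] //.
  by rewrite tauK setUC.
case: (ltnP k q) => kq; first exact: vC kq Ck.
apply: (vC (tau k)); first by rewrite tauLR'.
by rewrite tauK setUC.
Qed.

Lemma key_edge F H : is_pdCG tau F -> is_pdCG tau H -> EE tau F \subset EE tau H ->
  Eset H \subset Eset F ->
  forall C g h, C \in H.2 -> g \in FL tau -> h \in FR tau -> tau_e tau h = g ->
      C = [set g; h] -> C \in F.2.
Proof.
move=> hF hH EEFH EHF C g h hC gL hR hg CE.
have [pH1 pH2 EH sh1H sh2H] := hH.
have [pF1 pF2 EF sh1F sh2F] := hF.
have /and3P[_ tH2 _] := pH2.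
have hV : h \in FV p by move: hR => /setIdP[].
have gEH : g \in Eset H by apply/bigcupP; exists C; rewrite // CE !inE eqxx.
have hEH : h \in Eset H by apply/bigcupP; exists C; rewrite // CE !inE eqxx orbT.
have gE := subsetP EHF _ gEH; have hE := subsetP EHF _ hEH.
have : g \in cover F.2 := gE.
move=> /bigcupP[D DF gD].
case: (sh2F D DF) => [[m Dm]|[m [nm Dm]]].
  move: gD DF; rewrite Dm => /set1P <- gF.
  have : g \in EE tau F.
    apply/setIdP; split=> //; rewrite !in_setI gE gL /=.
    by rewrite -hg; apply: imset_f; rewrite in_setI hE.
  move=> /(subsetP EEFH) /setIdP [_ gH].
  have := same_class tH2 gH hC (set11 g).
  rewrite CE !inE eqxx /= => /(_ isT) E.
  have : h \in [set g] by rewrite E !inE eqxx orbT.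
  move=> /set1P E2; move: gL hR; rewrite E2 => /setIdP[_ a] /setIdP[_ b].
  by move: (ltn_trans a b); rewrite ltnn.
have mV : m \in FV p.
  apply: (subsetP EF); apply/bigcupP; exists D; rewrite // Dm !inE eqxx //.
suff DC : D = C by rewrite -DC.
move: gD; rewrite Dm CE !inE => /orP[/eqP E|/eqP E].
  by rewrite -E -hg tau_eK.
have mh : m = h by rewrite -(tau_eK mV) -E -hg tau_eK.
by rewrite -E mh setUC.
Qed.

Lemma key F H : is_pdCG tau F -> is_pdCG tau H ->
  t_le q tau F H -> Eset H \subset Eset F -> s_le R F H.
Proof.
move=> hF hH [EFH LFH EEFH] EHF K [sym pd Z V Ed].
have [pH1 pH2 EH sh1H sh2H] := hH.
split => //.
- move=> i j ij nE; apply: Z => //; apply/negP => /(subsetP EFH); exact/negP.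
- move=> C hC i j iC jC.
  case: (sh1H C hC) => [[k Ck]|[k Ck]].
    by move: iC jC; rewrite Ck => /set1P -> /set1P ->.
  exact: V (key_vert hF hH LFH hC Ck) i j iC jC.
- move=> C hC e f eC fC.
  case: (sh2H C hC) => [[k Ck]|[k [nk Ck]]].
    by move: eC fC; rewrite Ck => /set1P -> /set1P ->.
  suff CF : C \in F.2 by exact: Ed CF e f eC fC.
  have kV : k \in FV p.
    apply: (subsetP EH); apply/bigcupP; exists C; rewrite // Ck !inE eqxx //.
  case kL: (k \in FL tau).
    apply: (key_edge hF hH EEFH EHF hC kL (tau_e_FL kL)) => //; exact: tau_eK.
  case kR: (k \in FR tau).
    apply: (key_edge hF hH EEFH EHF hC (tau_e_FR kR) kR) => //; by rewrite setUC.
  by move: nk; rewrite tau_e_twin ?kL ?kR ?eqxx.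
Qed.

End Tau.

Theorem proposition7 (R : realType) (p q : nat) (tau : 'I_p -> 'I_p) :
  twin_pairing tau -> LR_compatible q tau ->
  forall H G : cgraph p, is_pdCG tau H -> is_pdCG tau G ->
    (s_le R H G -> t_le q tau H G) /\
    (s_le R H G -> t_covered q tau H G -> s_covered R tau H G).
Proof.
move=> Htw HLR H G hH hG.
have P1 := @part1 p q tau Htw R.
have KY := @key p q tau Htw HLR R.
split; first exact: P1.
move=> sHG [[tHG ntGH] noF]; split.
  by split=> // sGH; apply: ntGH; apply: P1.
move=> [F [hF [[sHF nsFH] [sFG nsGF]]]]; apply: noF; exists F; split=> //.
have tHF := P1 _ _ hH hF sHF; have tFG := P1 _ _ hF hG sFG.
split; split=> // t.
  by apply: nsFH; apply: KY => //; case: tHF.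
by apply: nsGF; apply: KY => //; case: tFG.
Qed.
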